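(* Let $M_1,M_2$ be modules in the class $\mathcal C$ with structural exact sequences $0\to\operatorname{Lie}_E(K_\infty)/\Lambda_s\xrightarrow{\iota_s}M_s\to H_s\to0$ ($s=1,2$). Let $\Gamma:K_\infty^n\to K_\infty^n$ be an $\mathbb{F}_q[G]$-linear map given by an everywhere convergent power series \[\Gamma(\mathbf z)=\mathbf z+D_1\mathbf z^{(1)}+D_2\mathbf z^{(2)}+\cdots,\qquad D_i\in M_n(K_\infty),\] where $\mathbf z^{(i)}$ denotes the entrywise $q^i$-th power. Assume $\Gamma(\Lambda_1)\subseteq\Lambda_2$, let $\widetilde\Gamma:K_\infty^n/\Lambda_1\to K_\infty^n/\Lambda_2$ be the induced map, and let $\gamma:M_1\to M_2$ be a continuous $\mathbb{F}_q[G]$-linear morphism with $\iota_2^{-1}\circ\gamma\circ\iota_1=\widetilde\Gamma$ on $t^{-\ell}\mathcal{O}_{K_\infty}^n$. Then $\gamma$ is infinitely tangent to the identity.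
   Context: Let $p$ be a prime, $q$ a power of $p$, $A=\mathbb F_q[t]$, $k=\mathbb F_q(t)$, $k_\infty=\mathbb F_q((t^{-1}))$. Let $F/k$ be finite separable and $K/F$ finite Galois with abelian group $G$; $K_\infty=K\otimes_kk_\infty$, $F_\infty=F\otimes_kk_\infty$. $E$ is an $n$-dimensional $t$-module over the integral closure $\mathcal O_F$ of $A$ in $F$: $\phi_E:A\to M_n(\mathcal O_F)\{\tau\}$ with $\phi_E(t)=d_E[t]+\sum_{i\ge1}M_i\tau^i$ (finite sum), $d_E[t]=tI_n+N$, $N$ nilpotent; $\operatorname{Lie}_E(K_\infty)$ is $K_\infty^n$ with $a\in A$ acting by the $\tau^0$-coefficient $d_E[a]$ of $\phi_E(a)$, a $k_\infty[G]$-module. An $A[G]$-lattice is an $A[G]$-submodule of $\operatorname{Lie}_E(K_\infty)$, free over $A$ of rank $\dim_{k_\infty}\operatorname{Lie}_E(K_\infty)$, spanning over $k_\infty$. The class $\mathcal C$ consists of compact $G$-cohomologically trivial $A[G]$-modules $M$ with an exact sequence of topological $A[G]$-modules $0\to\operatorname{Lie}_E(K_\infty)/\Lambda\xrightarrow{\iota}M\to H\to0$, $\Lambda$ an $A[G]$-lattice, $H$ finite. Equip $K_\infty$ with the sup norm $\|\cdot\|$ over its components normalized by $\|t\|=q$, extended to $K_\infty^n$ by the max over coordinates; $\mathcal O_{K_\infty}=\{x:\|x\|\le1\}$. Fix $\ell$ with $t^{-\ell}\mathcal O_{K_\infty}^n\cap\Lambda_s=0$ for $s=1,2$ and identify $t^{-i}\mathcal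 O_{K_\infty}^n$ ($i\ge\ell$) with its image in $M_s$ via $\iota_s$. A continuous $\mathbb F_q[G]$-linear $\gamma:M_1\to M_2$ is infinitely tangent to the identity if for every $N\ge0$ there is $i\ge\ell$ such that $\iota_2^{-1}\circ\gamma\circ\iota_1$ restricts to a bijective isometry $\gamma_i$ of $t^{-i}\mathcal O_{K_\infty}^n$ onto itself with $\|\gamma_i(x)-x\|\le q^{-N}\|x\|$ for all $x\in t^{-i}\mathcal O_{K_\infty}^n$. *)

(* Defs.v *)
From HB Require Import structures.
From mathcomp Require Import all_boot all_order all_algebra all_fingroup.
From mathcomp Require Import all_classical all_reals all_analysis.
Set Implicit Arguments. Unset Strict Implicit. Unset Printing Implicit Defensive.
Import Order.TTheory GRing.Theory Num.Theory.
Local Open Scope ring_scope.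

(*  kinf  : k_oo = F_q((1/t)), given with cF : Fq -> kinf and tk = t          *)
(*  Kinf  : K_oo = K (x)_k k_oo, a k_oo-algebra via emb : kinf -> Kinf        *)
(*  Nmat  : the nilpotent part N of d_E[t] = t I_n + N                        *)

Section Setting.
Context (Fq : finFieldType) (R : realType) (kinf : fieldType)
  (Kinf : comUnitRingType) (gT : finGroupType)
  (cF : {rmorphism Fq -> kinf}) (emb : {rmorphism kinf -> Kinf})
  (tk : kinf) (nrm : Kinf -> R) (actK : gT -> {rmorphism Kinf -> Kinf})
  (n d : nat) (Nmat : 'M[Kinf]_n).

Definition qF : nat := #|Fq|.
Definition tK : Kinf := emb tk.
Definition absk (a : kinf) : R := nrm (emb a).

Definition complete_for (T : zmodType) (nm : T -> R) : Prop :=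
  forall u : nat -> T,
    (forall e : R, 0 < e -> exists N : nat, forall i j : nat,
        (N <= i)%N -> (N <= j)%N -> nm (u i - u j) < e) ->
    exists l : T, forall e : R, 0 < e -> exists N : nat, forall i : nat,
        (N <= i)%N -> nm (u i - l) < e.

(* k_oo is a complete discretely valued field with uniformizer 1/t,
   residue field F_q, and |t| = q;  K_oo is a finite free k_oo-algebra of
   dimension d, with a power-multiplicative ultrametric norm extending |.|,
   complete; G is a finite abelian group acting faithfully on K_oo by
   k_oo-algebra automorphisms, isometrically. *)
Definition setting_axioms : Prop :=
  [/\ [/\ (forall x : Kinf, 0 <= nrm x /\ (nrm x = 0 <-> x = 0)),
      (forall x y : Kinf, nrm (x + y) <= Num.max (nrm x) (nrm y)),
      (forall (a : kinf) (x : Kinf), nrm (emb a * x) = absk a * nrm x),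
      (forall x y : Kinf, nrm (x * y) <= nrm x * nrm y) &
      (forall (x : Kinf) (m : nat), nrm (x ^+ m.+1) = nrm x ^+ m.+1)],
      [/\ absk tk = qF%:R,
      (forall a : kinf, a != 0 -> exists m : int, absk a = qF%:R ^ m) &
      (forall a : kinf, absk a <= 1 -> exists c : Fq, absk (a - cF c) < 1)] &
      [/\ complete_for absk, complete_for nrm,
          (exists b : 'I_d -> Kinf,
             (forall x : Kinf, exists a : 'I_d -> kinf,
                 x = \sum_(j < d) emb (a j) * b j) /\
             (forall a : 'I_d -> kinf,
                 \sum_(j < d) emb (a j) * b j = 0 -> forall j, a j = 0)) &
          [/\ abelian [set: gT] /\ (forall x, actK 1 x = x),
              (forall g h x, actK (g * h)%g x = actK g (actK h x)),
              (forall g, (forall x, actK g x = x) -> g = 1%g),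
              (forall g a, actK g (emb a) = emb a) &
              (forall g x, nrm (actK g x) = nrm x)]]].

Definition tmodule_axioms : Prop :=
  Nmat ^+ n = 0 /\ (forall g i j, actK g (Nmat i j) = Nmat i j).

Definition dEt : 'M[Kinf]_n := tK%:M + Nmat.

(* action of a in A = F_q[t] on Lie_E(K_oo) = K_oo^n via d_E[a] = a(d_E[t]) *)
Definition dEact (a : {poly Fq}) (v : 'cV[Kinf]_n) : 'cV[Kinf]_n :=
  \sum_(i < size a) emb (cF a`_i) *: (dEt ^+ i *m v).

Definition gv (g : gT) (v : 'cV[Kinf]_n) : 'cV[Kinf]_n := map_mx (actK g) v.

Definition nrmv (v : 'cV[Kinf]_n) : R := \big[Num.max/0]_(i < n) nrm (v i 0).

Definition tball (i : int) (v : 'cV[Kinf]_n) : Prop :=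
  exists y : 'cV[Kinf]_n, nrmv y <= 1 /\ v = tK ^ (- i) *: y.

(* A[G]-lattice in Lie_E(K_oo): G-stable, free over A (acting through d_E)
   of rank n*d = dim_{k_oo} Lie_E(K_oo), with a basis spanning over k_oo *)
Definition AG_lattice (L : 'cV[Kinf]_n -> Prop) : Prop :=
  (forall g v, L v -> L (gv g v)) /\
  exists b : 'I_(n * d) -> 'cV[Kinf]_n,
    [/\ (forall v, L v <-> exists a : 'I_(n * d) -> {poly Fq},
                             v = \sum_(j < n * d) dEact (a j) (b j)),
        (forall a : 'I_(n * d) -> {poly Fq},
            \sum_(j < n * d) dEact (a j) (b j) = 0 -> forall j, a j = 0) &
        (forall v, exists c : 'I_(n * d) -> kinf,
            v = \sum_(j < n * d) emb (c j) *: b j)].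

Section Cohomology.
Context (M : zmodType) (actM : gT -> M -> M).

Definition merge_at (i : nat) (s : seq gT) : seq gT :=
  take i.-1 s ++ (nth 1%g s i.-1 * nth 1%g s i)%g :: drop i.+1 s.

(* inhomogeneous coboundary of a k-cochain f, evaluated at (g_1..g_{k+1}) *)
Definition cobound (k : nat) (f : seq gT -> M) (s : seq gT) : M :=
  actM (head 1%g s) (f (behead s))
  + \sum_(1 <= i < k.+1) f (merge_at i s) *~ ((-1) ^+ i)
  + f (take k s) *~ ((-1) ^+ k.+1).

(* H^k(H, M) = 0 for every subgroup H and every k >= 1 *)
Definition cohom_trivial : Prop :=
  forall (H : {group gT}) (k : nat), (0 < k)%N ->
  forall f : seq gT -> M,
    (forall s, size s = k.+1 -> all (fun g => g \in H) s -> cobound k f s = 0) ->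
    exists h : seq gT -> M,
      forall s, size s = k -> all (fun g => g \in H) s -> f s = cobound k.-1 h s.
End Cohomology.

(* M is in the class C, with structural sequence
   0 -> Lie_E(K_oo)/L --iota--> M -> H -> 0  (iota given on K_oo^n) *)
Definition in_class_C (M : topologicalZmodType) (aM : {poly Fq} -> M -> M)
  (actM : gT -> M -> M) (iota : 'cV[Kinf]_n -> M)
  (L : 'cV[Kinf]_n -> Prop) : Prop :=
  [/\ compact [set: M] /\ hausdorff_space M /\ cohom_trivial actM,
      [/\ (forall a x y, aM a (x + y) = aM a x + aM a y),
          (forall a b x, aM (a + b) x = aM a x + aM b x),
          (forall a b x, aM (a * b) x = aM a (aM b x)),
          (forall x, aM 1 x = x) &
          (forall a, continuous (aM a))],
      [/\ (forall x, actM 1%g x = x),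
          (forall g h x, actM (g * h)%g x = actM g (actM h x)),
          (forall g x y, actM g (x + y) = actM g x + actM g y),
          (forall g, continuous (actM g)) &
          (forall g a x, actM g (aM a x) = aM a (actM g x))],
      AG_lattice L &
      [/\ (forall v w, iota (v + w) = iota v + iota w) /\
          (forall a v, iota (dEact a v) = aM a (iota v)),
          (forall g v, iota (gv g v) = actM g (iota v)),
          (forall v, iota v = 0 <-> L v),
          (forall v (U : set M), nbhs (iota v) U ->
              exists2 e : R, 0 < e & forall w, nrmv (w - v) < e -> U (iota w)) &
          (* the cokernel H is finite *)
          (exists s : seq M, forall m : M,
              exists2 m0, m0 \in s & exists v, m = m0 + iota v)]].

Definition inf_tangent (M1 M2 : topologicalZmodType)
  (iota1 : 'cV[Kinf]_n -> M1) (iota2 : 'cV[Kinf]_n -> M2) (l : int)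
  (gamma : M1 -> M2) : Prop :=
  forall N : nat, exists i : int, l <= i /\
    exists gi : 'cV[Kinf]_n -> 'cV[Kinf]_n,
      [/\ (forall x, tball i x -> tball i (gi x) /\ gamma (iota1 x) = iota2 (gi x)),
          (forall x y, tball i x -> tball i y -> gi x = gi y -> x = y),
          (forall y, tball i y -> exists2 x, tball i x & gi x = y),
          (forall x y, tball i x -> tball i y -> nrmv (gi x - gi y) = nrmv (x - y)) &
          (forall x, tball i x -> nrmv (gi x - x) <= qF%:R ^- N * nrmv x)].

End Setting.

(* Main.v *)
Require Import Defs.
From HB Require Import structures.
From mathcomp Require Import all_boot all_order all_algebra all_fingroup.
From mathcomp Require Import all_classical all_reals all_analysis.
From mathcomp Require Import lra ring zify.
Import Order.TTheory GRing.Theory Num.Theory.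
Local Open Scope ring_scope.

Section Norm.
Variables (R : realType) (K : comUnitRingType) (nrm : K -> R).
Hypothesis nrm_ge0 : forall x, 0 <= nrm x.
Hypothesis nrm_eq0 : forall x, nrm x = 0 -> x = 0.
Hypothesis nrm0 : nrm 0 = 0.
Hypothesis nrmD : forall x y, nrm (x+y) <= Num.max (nrm x) (nrm y).
Hypothesis nrmN : forall x, nrm (-x) = nrm x.
Hypothesis nrmM : forall x y, nrm (x*y) <= nrm x * nrm y.
Hypothesis nrmX : forall x m, nrm (x ^+ m.+1) = nrm x ^+ m.+1.
Hypothesis nrm_complete : complete_for nrm.
Variable n : nat.
Local Notation nv := (@nrmv R K nrm n).
Implicit Types (v w u : 'cV[K]_n) (i : 'I_n).

Lemma nv_ge0 v : 0 <= nv v.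
Proof.
rewrite /nrmv; elim/big_ind: _ => //.
by move=> x y hx hy; rewrite le_max hx.
Qed.

Lemma nv_ge v i : nrm (v i 0) <= nv v.
Proof. exact: (le_bigmax _ (fun i => nrm (v i 0))). Qed.

Lemma nv_le v r : 0 <= r -> (forall i, nrm (v i 0) <= r) -> nv v <= r.
Proof. by move=> r0 H; apply/bigmax_leP; split. Qed.

Lemma nv_lt v e : 0 < e -> (forall i, nrm (v i 0) < e) -> nv v < e.
Proof.
move=> e0 H; rewrite /nrmv; elim/big_ind: _ => //.
by move=> x y hx hy; rewrite gt_max hx.
Qed.

Lemma nvD v w : nv (v + w) <= Num.max (nv v) (nv w).
Proof.
apply: nv_le => [|i]; first by rewrite le_max nv_ge0.
rewrite mxE; apply: (le_trans (nrmD _ _)).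
by rewrite ge_max !le_max !nv_ge orbT.
Qed.

Lemma nvN v : nv (- v) = nv v.
Proof. by apply: eq_bigr => i _; rewrite mxE nrmN. Qed.

Lemma nvB v w : nv (v - w) <= Num.max (nv v) (nv w).
Proof. by rewrite -(nvN w) nvD. Qed.

Lemma nv_eq0 v : nv v = 0 -> v = 0.
Proof.
move=> H; apply/matrixP => i j; rewrite ord1 mxE; apply: nrm_eq0.
by apply/le_anti; rewrite nrm_ge0 -H nv_ge.
Qed.

Lemma nv0 : nv 0 = 0.
Proof. by apply/le_anti; rewrite nv_ge0 andbT; apply: nv_le => // i; rewrite mxE nrm0. Qed.

Lemma nv_strict w u : nv u < nv w -> nv (w + u) = nv w.
Proof.
move=> H; apply/le_anti; rewrite (le_trans (nvD _ _)) ?ge_max ?lexx ?(ltW H) //=.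
have := nvB (w + u) u; rewrite addrK => h.
move: h; rewrite le_max => /orP[] // h.
by move: (lt_le_trans H h); rewrite ltxx.
Qed.

Lemma nv_scale c k v : 0 <= k -> (forall x, nrm (c * x) = k * nrm x) ->
  nv (c *: v) = k * nv v.
Proof.
move=> k0 H; rewrite /nrmv (big_morph (fun x : R => k * x) (fun x y => maxr_pMr x y k0) (mulr0 k)).
by apply: eq_bigr => i _; rewrite mxE H.
Qed.

Lemma nv_lim0 v b : 0 <= b -> (forall e, 0 < e -> nv v <= Num.max e b) -> nv v <= b.
Proof.
move=> b0 H; rewrite leNgt; apply/negP => hb.
have e0 : 0 < (nv v + b) / 2 by lra.
have := H _ e0; rewrite le_max => /orP[] h1; lra.
Qed.

Implicit Types (A : 'M[K]_n) (a k : 'I_n).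
Definition mn (A : 'M[K]_n) := \big[Num.max/0]_(k < n) nv (col k A).

Lemma mn_ge0 A : 0 <= mn A.
Proof.
rewrite /mn; elim/big_ind: _ => //; last by move=> *; apply: nv_ge0.
by move=> x y hx hy; rewrite le_max hx.
Qed.

Lemma mn_ge A a k : nrm (A a k) <= mn A.
Proof.
apply: le_trans (le_bigmax _ (fun k => nv (col k A)) k).
by have := nv_ge (col k A) a; rewrite mxE.
Qed.

Lemma mn_le A r : 0 <= r -> (forall k, nv (col k A) <= r) -> mn A <= r.
Proof. by move=> r0 H; apply/bigmax_leP; split. Qed.

Lemma nv_mul A v : nv (A *m v) <= mn A * nv v.
Proof.
apply: nv_le => [|a]; first by rewrite mulr_ge0 ?mn_ge0 ?nv_ge0.
rewrite mxE; elim/big_ind: _ => //.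
- by rewrite nrm0 mulr_ge0 ?mn_ge0 ?nv_ge0.
- by move=> x y hx hy; apply: le_trans (nrmD _ _) _; rewrite ge_max hx.
move=> k _; apply: le_trans (nrmM _ _) _.
by apply: ler_pM => //; [apply: mn_ge | apply: nv_ge].
Qed.

Lemma nv_pow v p : nv (map_mx (fun x => x ^+ p.+1) v) <= nv v ^+ p.+1.
Proof.
apply: nv_le => [|i]; first by rewrite exprn_ge0 ?nv_ge0.
rewrite mxE nrmX; rewrite ler_pXn2r // ?nv_ge //.
  by rewrite qualifE /= nrm_ge0.
by rewrite qualifE /= nv_ge0.
Qed.

Lemma nv_complete : complete_for nv.
Proof.
move=> u Hu.
have Hc : forall a : 'I_n, exists l : K, forall e : R, 0 < e -> exists N : nat,
    forall i : nat, (N <= i)%N -> nrm (u i a 0 - l) < e.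
  move=> a; apply: nrm_complete => e e0.
  have [N HN] := Hu e e0; exists N => i j hi hj.
  by apply: le_lt_trans (HN i j hi hj); have := nv_ge (u i - u j) a; rewrite !mxE.
have [l Hl] := fin_all_exists Hc.
exists (\col_a l a) => e e0.
have Hc2 : forall a : 'I_n, exists N : nat, forall i : nat, (N <= i)%N -> nrm (u i a 0 - l a) < e.
  by move=> a; apply: Hl.
have [Nf HN] := fin_all_exists Hc2.
exists (\max_(a < n) Nf a)%N => i hi.
apply: nv_lt => // a; rewrite !mxE; apply: HN.
apply: leq_trans _ hi; exact: leq_bigmax.
Qed.


Lemma maxle2 (a b s e : R) : a <= s -> b <= e -> Num.max a b <= Num.max e s.
Proof. by move=> h1 h2; rewrite ge_max !le_max h1 h2 !orbT. Qed.

Variable Gamma : 'cV[K]_n -> 'cV[K]_n.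
Hypothesis HGadd : forall x y, Gamma (x + y) = Gamma x + Gamma y.

Lemma Gamma0 : Gamma 0 = 0.
Proof. by apply: (addrI (Gamma 0)); rewrite -HGadd !addr0. Qed.

Lemma GammaN x : Gamma (- x) = - Gamma x.
Proof. by apply/eqP; rewrite -addr_eq0 -HGadd addNr Gamma0. Qed.

Lemma GammaB x y : Gamma (x - y) = Gamma x - Gamma y.
Proof. by rewrite HGadd GammaN. Qed.

Section Contr.
Variables (s eps : R).
Hypothesis s0 : 0 <= s.
Hypothesis eps0 : 0 <= eps.
Hypothesis eps1 : eps <= 2^-1.
Hypothesis Hk : forall w, nv w <= s -> nv (Gamma w - w) <= eps * nv w.

Lemma eps_le1 : eps <= 1.
Proof. by apply: le_trans eps1 _; rewrite invf_le1 // ler1n. Qed.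

Lemma G_iso w : nv w <= s -> nv (Gamma w) = nv w.
Proof.
move=> hw; have [/nv_eq0 ->|hpos] := eqVneq (nv w) 0; first by rewrite Gamma0.
have h : nv (Gamma w - w) < nv w.
  apply: le_lt_trans (Hk _ hw) _.
  have := nv_ge0 w; move: hpos; rewrite neq_lt => /orP[h0|h0] h1; first lra.
  have : eps * nv w <= 2^-1 * nv w by apply: ler_wpM2r.
  lra.
by rewrite -(nv_strict _ _ h) addrC subrK.
Qed.

Lemma G_ball w : nv w <= s -> nv (Gamma w) <= s.
Proof. by move=> hw; rewrite G_iso. Qed.

Lemma G_isoB x y : nv x <= s -> nv y <= s -> nv (Gamma x - Gamma y) = nv (x - y).
Proof.
move=> hx hy; rewrite -GammaB G_iso //.
by apply: le_trans (nvB _ _) _; rewrite ge_max hx hy.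
Qed.

Definition xs (y : 'cV[K]_n) (m : nat) := iter m (fun x => y - (Gamma x - x)) y.

Lemma G_surj y : nv y <= s -> exists2 x, nv x <= s & Gamma x = y.
Proof.
move=> hy.
have hxs : forall k : nat, nv (xs y k) <= s.
  elim=> [//|k IH].
  rewrite /xs iterS -/(xs y k).
  apply: le_trans (nvB _ _) _; rewrite ge_max hy /=.
  apply: le_trans (Hk _ IH) _.
  by apply: le_trans (ler_wpM2l eps0 IH) _; rewrite ler_piMl //; apply: le_trans eps1 _; rewrite invf_le1 // ler1n.
have hd : forall k : nat, nv (xs y k.+1 - xs y k) <= eps ^+ k * s.
  elim=> [|k IH].
    by rewrite expr0 mul1r; apply: le_trans (nvB _ _) _; rewrite ge_max hxs.
  have -> : xs y k.+2 - xs y k.+1 = - (Gamma (xs y k.+1 - xs y k) - (xs y k.+1 - xs y k)).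
    rewrite GammaB /= -/(xs y k.+1) -/(xs y k).
    by apply/matrixP => i j; rewrite !mxE /=; ring.
  rewrite nvN; apply: le_trans (Hk _ _) _.
    by apply: le_trans (nvB _ _) _; rewrite ge_max !hxs.
  by rewrite exprS -mulrA; apply: ler_wpM2l.
have hN : forall N k : nat, nv (xs y (k + N) - xs y N) <= eps ^+ N * s.
  move=> N; elim=> [|k IH]; first by rewrite add0n subrr nv0 mulr_ge0 // exprn_ge0.
  have -> : xs y (k.+1 + N) - xs y N = (xs y (k + N).+1 - xs y (k + N)) + (xs y (k + N) - xs y N).
    by rewrite addSn; apply/matrixP => i j; rewrite !mxE /=; ring.
  apply: le_trans (nvD _ _) _; rewrite ge_max IH andbT.
  apply: le_trans (hd _) _; apply: ler_wpM2r => //.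
  by apply: ler_wiXn2l => //; [exact: eps_le1 | apply: leq_addl].
have hsmall : forall e : R, 0 < e -> exists N : nat, eps ^+ N * s < e.
  move=> e e0; exists (Num.Def.archi_bound (s / e)).
  have h2 := @upper_nthrootP R (s / e) _ (leqnn _).
  set N := Num.Def.archi_bound _ in h2 *.
  have hp : 0 < (2 : R) ^+ N by rewrite exprn_gt0.
  have h3 : eps ^+ N <= (2 ^+ N)^-1.
    by rewrite -exprVn; apply: lerXn2r => //; rewrite qualifE /= ?invr_ge0.
  apply: le_lt_trans (ler_wpM2r s0 h3) _.
  by rewrite mulrC ltr_pdivrMr // mulrC -ltr_pdivrMr.
have hC : forall e : R, 0 < e -> exists N : nat, forall i j : nat,
    (N <= i)%N -> (N <= j)%N -> nv (xs y i - xs y j) < e.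
  move=> e e0; have [N HN] := hsmall e e0; exists N => i j hi hj.
  have -> : xs y i - xs y j = (xs y (i - N + N) - xs y N) - (xs y (j - N + N) - xs y N).
    by rewrite !subnK //; apply/matrixP => a b; rewrite !mxE /=; ring.
  apply: le_lt_trans (nvB _ _) _; rewrite gt_max.
  by rewrite !(le_lt_trans (hN _ _) HN).
have [L HL] := @nv_complete (xs y) hC.
have hL : nv L <= s.
  apply: nv_lim0 => // e e0; have [N HN] := HL e e0.
  have -> : L = xs y N - (xs y N - L) by rewrite opprB addrC subrK.
  apply: le_trans (nvB _ _) _; apply: maxle2; first exact: hxs.
  exact: ltW (HN N (leqnn _)).
exists L => //.
have : nv (Gamma L - y) <= 0.
  apply: nv_lim0 => // e e0; have [N HN] := HL e e0.
  have -> : Gamma L - y = - (Gamma (xs y N) - Gamma L) - ((xs y N.+1 - L) - (xs y N - L)).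
    by rewrite /= -/(xs y N); apply/matrixP => a b; rewrite !mxE /=; ring.
  apply: le_trans (nvB _ _) _; rewrite nvN G_isoB ?hxs //.
  have h1 := ltW (HN N (leqnn _)); have h2 := ltW (HN N.+1 (leqW (leqnn _))).
  have h3 : nv ((xs y N.+1 - L) - (xs y N - L)) <= e.
    by apply: le_trans (nvB _ _) _; rewrite ge_max h1 h2.
  by rewrite ge_max !le_max h1 h3.
by move=> h; apply/eqP; rewrite -subr_eq0; apply/eqP/nv_eq0/le_anti; rewrite h nv_ge0.
Qed.

End Contr.

Lemma nv_pow2 v (t : R) p : nv v <= t -> t <= 1 ->
  nv (map_mx (fun x => x ^+ p.+2) v) <= nv v * t.
Proof.
move=> hv ht; apply: le_trans (nv_pow v p.+1) _.
rewrite exprS; apply: ler_wpM2l; first exact: nv_ge0.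
apply: le_trans _ (hv); rewrite exprS; apply: ler_piMr; first exact: nv_ge0.
apply: exprn_ile1; first exact: nv_ge0.
exact: le_trans (hv) ht.
Qed.

Variables (D : nat -> 'M[K]_n) (e : nat).
Hypothesis he : (1 < e)%N.
Hypothesis HGconv : forall z : 'cV[K]_n, forall ee : R, 0 < ee ->
     exists m0 : nat, forall m : nat, (m0 <= m)%N ->
       nv (Gamma z - (z + \sum_(1 <= i < m.+1)
                   D i *m map_mx (fun x => x ^+ (e ^ i)) z)) < ee.

Lemma key (ep : R) : 0 < ep -> exists2 s', 0 < s' &
  forall w, nv w <= s' -> nv (Gamma w - w) <= ep * nv w.
Proof.
move=> ep0.
have Ht : forall z (ee : R), 0 < ee -> exists m0 : nat, forall m : nat, (m0 <= m)%N ->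
    nv (D m.+1 *m map_mx (fun x => x ^+ (e ^ m.+1)) z) < ee.
  move=> z ee hee; have [m0 Hm] := HGconv z _ hee; exists m0 => m hm.
  have h1 := Hm m hm; have h2 := Hm m.+1 (leqW hm).
  rewrite (big_nat_recr m.+1) // in h2.
  move: h1 h2.
  set S := \sum_(1 <= i < m.+1) _; set T := D m.+1 *m _ => h1 h2.
  have -> : T = (Gamma z - (z + S)) - (Gamma z - (z + (S + T))).
    by apply/matrixP => a b; rewrite !mxE; ring.
  by apply: le_lt_trans (nvB _ _) _; rewrite gt_max h1 h2.
have Hcol : forall k : 'I_n, exists m0 : nat, forall m : nat, (m0 <= m)%N ->
    nv (col k (D m.+1)) < 1.
  move=> k; have [m0 Hm] := Ht (delta_mx k 0) 1 ltr01; exists m0 => m hm.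
  have := Hm m hm.
  have -> : map_mx (fun x => x ^+ (e ^ m.+1)) (delta_mx k 0 : 'cV[K]_n) = delta_mx k 0.
    apply/matrixP => a b; rewrite !mxE; case: (_ && _) => //=.
      by rewrite expr1n.
    by rewrite expr0n expn_eq0; case: e he.
  by rewrite colE.
have [Jf HJf] := fin_all_exists Hcol.
set J := (\max_(k < n) Jf k)%N.
have HJ : forall m : nat, (J <= m)%N -> mn (D m.+1) <= 1.
  move=> m hm; apply: mn_le => // k; apply: ltW; apply: HJf.
  by apply: leq_trans hm; exact: leq_bigmax.
set B := Num.max 1 (\big[Num.max/0]_(j < J.+2) mn (D j)).
have HB1 : 1 <= B by rewrite le_max lexx.
have HB : forall j : nat, (0 < j)%N -> mn (D j) <= B.
  move=> j hj; case: (ltnP j J.+2) => hJ.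
    apply: le_trans (le_bigmax 0 (fun j : 'I_(J.+2) => mn (D j)) (Ordinal hJ)) _.
    by rewrite /B le_max lexx orbT.
  case: j hj hJ => // m _ hm; apply: le_trans (HJ m _) HB1.
  by rewrite -ltnS ltnW.
have B0 : 0 < B by apply: lt_le_trans HB1; exact: ltr01.
exists (Num.min 1 (ep / B)); first by rewrite lt_min ltr01 divr_gt0.
move=> w hw.
have hs1 : Num.min 1 (ep / B) <= 1 by rewrite ge_min lexx.
have hs2 : B * Num.min 1 (ep / B) <= ep.
  by rewrite mulrC -ler_pdivlMr // ge_min lexx orbT.
have hterm : forall j : nat, (0 < j)%N ->
    nv (D j *m map_mx (fun x => x ^+ (e ^ j)) w) <= ep * nv w.
  move=> j hj.
  have : (1 < e ^ j)%N by rewrite -{1}(expn0 e) ltn_exp2l.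
  case hE : (e ^ j)%N => [|[|p]] // _.
  apply: le_trans (nv_mul _ _) _.
  apply: le_trans (ler_pM (mn_ge0 _) (nv_ge0 _) (HB j hj) (nv_pow2 _ _ p hw hs1)) _.
  rewrite mulrCA mulrC; apply: ler_wpM2r; first exact: nv_ge0.
  exact: hs2.
have hb0 : 0 <= ep * nv w by rewrite mulr_ge0 ?nv_ge0 // ltW.
have hsum : forall m : nat,
    nv (\sum_(1 <= i < m.+1) D i *m map_mx (fun x => x ^+ (e ^ i)) w) <= ep * nv w.
  move=> m; rewrite big_nat_cond; elim/big_ind: _ => //.
  - by rewrite nv0.
  - by move=> x y hx hy; apply: le_trans (nvD _ _) _; rewrite ge_max hx hy.
  by move=> i /andP[/andP[hi _] _]; apply: hterm.
apply: nv_lim0 => // ee hee; have [m0 Hm] := HGconv w _ hee.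
have -> : Gamma w - w = (Gamma w - (w + \sum_(1 <= i < m0.+1) D i *m map_mx (fun x => x ^+ (e ^ i)) w))
   + \sum_(1 <= i < m0.+1) D i *m map_mx (fun x => x ^+ (e ^ i)) w.
  by rewrite opprD addrA subrK.
by apply: le_trans (nvD _ _) _; rewrite ge_max !le_max (ltW (Hm m0 (leqnn _))) hsum orbT.
Qed.

Lemma abstract_main (q : R) (hq : 2 <= q) (ball : int -> 'cV[K]_n -> Prop)
  (Hball : forall (z : int) v, ball z v <-> nv v <= q ^ (- z)) (l : int) (N : nat) :
  exists i : int, l <= i /\
   [/\ (forall x, ball i x -> ball i (Gamma x) /\ ball l x),
       (forall x y, ball i x -> ball i y -> Gamma x = Gamma y -> x = y),
       (forall y, ball i y -> exists2 x, ball i x & Gamma x = y),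
       (forall x y, ball i x -> ball i y -> nv (Gamma x - Gamma y) = nv (x - y)) &
       (forall x, ball i x -> nv (Gamma x - x) <= q ^- N * nv x)].
Proof.
have q0 : 0 < q by lra.
have q1 : 1 <= q by lra.
set ep := (q ^+ N.+1)^-1.
have ep0 : 0 < ep by rewrite invr_gt0 exprn_gt0.
have ep1 : ep <= 2^-1.
  rewrite /ep lef_pV2 ?qualifE /= ?exprn_gt0 //; idtac.
  by apply: le_trans hq _; rewrite -{1}(expr1 q); apply: ler_weXn2l.
have epN : ep <= q ^- N.
  by rewrite /ep lef_pV2 ?qualifE /= ?exprn_gt0 //; apply: ler_weXn2l => //.
have [s' s'0 Hs'] := key _ ep0.
set i0 := Num.Def.archi_bound (s'^-1).
set m := (i0 + `|l|)%N.
exists (Posz m); split; first by rewrite /m; lia.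
have hqi : q ^ (- Posz m) = (q ^+ m)^-1 by rewrite exprnN.
have hs : (q ^+ m)^-1 <= s'.
  rewrite invf_ple ?qualifE /= ?exprn_gt0 //.
  apply: le_trans (ltW (upper_nthrootP (leq_addr _ _))) _.
  by apply: lerXn2r; rewrite ?qualifE //=; lra.
set s := (q ^+ m)^-1 in hs hqi.
have s0 : 0 <= s by rewrite invr_ge0 exprn_ge0 //; lra.
have Hk : forall w, nv w <= s -> nv (Gamma w - w) <= ep * nv w.
  by move=> w hw; apply: Hs'; apply: le_trans hw hs.
have Hb : forall v, ball (Posz m) v <-> nv v <= s.
  by move=> v; have := Hball (Posz m) v; rewrite hqi.
have ep0' := ltW ep0.
split.
- move=> x /Hb hx; split; first by apply/Hb; apply: (G_ball s ep ep1 Hk).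
  apply/Hball; apply: le_trans hx _; rewrite -hqi; apply: ler_weXz2l => //.
  by rewrite lerN2 /m; lia.
- move=> x y /Hb hx /Hb hy hxy; have := G_isoB s ep ep1 Hk x y hx hy.
  rewrite hxy subrr nv0 => /esym/nv_eq0/eqP; rewrite subr_eq0 => /eqP //.
- move=> y /Hb hy; have [x hx <-] := G_surj s ep s0 ep0' ep1 Hk y hy.
  by exists x => //; apply/Hb.
- by move=> x y /Hb hx /Hb hy; exact: G_isoB s ep ep1 Hk x y hx hy.
- move=> x /Hb hx; apply: le_trans (Hk x hx) _; apply: ler_wpM2r => //; exact: nv_ge0.
Qed.

End Norm.

Lemma nrm_powz (R : realType) (K : comUnitRingType) (nrm : K -> R) (c : K) (q : R)
  (cu : c \is a GRing.unit) (q0 : 0 < q)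
  (Hc : forall x, nrm (c * x) = q * nrm x) (z : int) x :
  nrm (c ^ z * x) = q ^ z * nrm x.
Proof.
have Hn : forall m x, nrm (c ^+ m * x) = q ^+ m * nrm x.
  elim=> [|m IH] y; first by rewrite !expr0 !mul1r.
  by rewrite exprS -mulrA Hc IH exprS mulrA.
case: z => m; first exact: Hn.
change (nrm ((c ^+ m.+1)^-1 * x) = (q ^+ m.+1)^-1 * nrm x).
have h := Hn m.+1 ((c ^+ m.+1)^-1 * x).
rewrite mulrA mulrV ?unitrX // mul1r in h.
by rewrite h mulrA mulVf ?mul1r // expf_neq0 // gt_eqF.
Qed.

Theorem mainTheorem13
  (Fq : finFieldType) (R : realType) (kinf : fieldType)
  (Kinf : comUnitRingType) (gT : finGroupType)
  (cF : {rmorphism Fq -> kinf}) (emb : {rmorphism kinf -> Kinf})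
  (tk : kinf) (nrm : Kinf -> R) (actK : gT -> {rmorphism Kinf -> Kinf})
  (n d : nat) (Nmat : 'M[Kinf]_n)
  (Hset : setting_axioms cF emb tk nrm actK d)
  (HE : tmodule_axioms actK Nmat)
  (* the two modules of the class C *)
  (M1 M2 : topologicalZmodType)
  (aM1 : {poly Fq} -> M1 -> M1) (aM2 : {poly Fq} -> M2 -> M2)
  (actM1 : gT -> M1 -> M1) (actM2 : gT -> M2 -> M2)
  (iota1 : 'cV[Kinf]_n -> M1) (iota2 : 'cV[Kinf]_n -> M2)
  (L1 L2 : 'cV[Kinf]_n -> Prop)
  (HM1 : in_class_C cF emb tk nrm actK d Nmat aM1 actM1 iota1 L1)
  (HM2 : in_class_C cF emb tk nrm actK d Nmat aM2 actM2 iota2 L2)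
  (* l with t^{-l} O^n  meeting L1 and L2 trivially *)
  (l : int)
  (Hl1 : forall v, tball emb tk nrm l v -> L1 v -> v = 0)
  (Hl2 : forall v, tball emb tk nrm l v -> L2 v -> v = 0)
  (* Gamma(z) = z + D_1 z^(1) + D_2 z^(2) + ..., everywhere convergent *)
  (Gamma : 'cV[Kinf]_n -> 'cV[Kinf]_n) (D : nat -> 'M[Kinf]_n)
  (HGconv : forall z : 'cV[Kinf]_n, forall e : R, 0 < e ->
     exists m0 : nat, forall m : nat, (m0 <= m)%N ->
       nrmv nrm (Gamma z - (z + \sum_(1 <= i < m.+1)
                   D i *m map_mx (fun x => x ^+ (qF Fq ^ i)) z)) < e)
  (* Gamma is F_q[G]-linear *)
  (HGadd : forall x y, Gamma (x + y) = Gamma x + Gamma y)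
  (HGlin : forall (c : Fq) x, Gamma (emb (cF c) *: x) = emb (cF c) *: Gamma x)
  (HGG : forall g x, Gamma (gv actK g x) = gv actK g (Gamma x))
  (HGL : forall v, L1 v -> L2 (Gamma v))
  (* gamma : M1 -> M2 continuous F_q[G]-linear *)
  (gamma : M1 -> M2) (Hgcont : continuous gamma)
  (Hgadd : forall x y, gamma (x + y) = gamma x + gamma y)
  (Hglin : forall (c : Fq) x, gamma (aM1 c%:P x) = aM2 c%:P (gamma x))
  (HgG : forall g x, gamma (actM1 g x) = actM2 g (gamma x))
  (* iota2^{-1} o gamma o iota1 = induced map of Gamma on t^{-l} O^n *)
  (Hgam : forall x, tball emb tk nrm l x -> gamma (iota1 x) = iota2 (Gamma x)) :
  inf_tangent Fq emb tk nrm iota1 iota2 l gamma.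
Proof.
case: Hset => [[H1 H2 H3 H4 H5] [Habs _ _] [_ Hcompl _ _]].
have nrm_ge0 : forall x, 0 <= nrm x by move=> x; case: (H1 x).
have nrm_eq0 : forall x, nrm x = 0 -> x = 0 by move=> x; case: (H1 x) => _ [].
have nrm0 : nrm 0 = 0 by case: (H1 0) => _ [_ ->].
have nrm1 : nrm 1 = 1.
  have h := H5 1 1; rewrite expr1n in h.
  have hn : nrm 1 != 0 by apply/eqP => /nrm_eq0/eqP; rewrite oner_eq0.
  by apply: (mulfI hn); rewrite mulr1 -expr2 -h.
have nrmN : forall x, nrm (- x) = nrm x.
  have hm1 : nrm (-1) = 1.
    have h := H5 (-1) 1; rewrite sqrrN expr1n nrm1 in h.
    have := nrm_ge0 (-1); move/eqP: h; rewrite eq_sym sqrf_eq1 => /orP[/eqP //|/eqP ->].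
    by move=> h; move: (lt_le_trans (ltrN10 R) h); rewrite ltxx.
  by move=> x; rewrite -mulN1r -(rmorphN1 emb) H3 /absk rmorphN1 hm1 mul1r.
set q : R := (qF Fq)%:R.
have hq2 : 2 <= q by rewrite /q ler_nat /qF card_finNzRing_gt1.
have q0 : 0 < q by apply: lt_le_trans hq2; rewrite ltr0n.
have tk0 : tk != 0.
  apply/eqP => h; move: Habs; rewrite /absk h rmorph0 nrm0 => /esym/eqP.
  by rewrite -/q gt_eqF.
have tKu : tK emb tk \is a GRing.unit by rewrite /tK rmorph_unit // unitfE.
have HtK : forall x, nrm (tK emb tk * x) = q * nrm x by move=> x; rewrite H3 Habs.
have tballE : forall (z : int) (v : 'cV[Kinf]_n),
    tball emb tk nrm z v <-> nrmv nrm v <= q ^ (- z).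
  move=> z v; split.
    case=> y [hy ->]; rewrite (@nv_scale R Kinf nrm n _ (q ^ (- z)) y (exprz_ge0 _ (ltW q0))); last first.
      by move=> x; apply: nrm_powz.
    by apply: ler_piMr => //; apply: exprz_ge0; apply: ltW.
  move=> hv; exists (tK emb tk ^ z *: v); split.
    rewrite (@nv_scale R Kinf nrm n _ (q ^ z) v (exprz_ge0 _ (ltW q0))); last by move=> x; apply: nrm_powz.
    have qu : q \is a GRing.unit by rewrite unitfE gt_eqF.
    apply: le_trans (ler_wpM2l (exprz_ge0 _ (ltW q0)) hv) _.
    by rewrite -exprzDr // subrr expr0z.
  by rewrite scalerA -exprzDr // addNr expr0z scale1r.
move=> N.
have [i [hli [A1 A2 A3 A4 A5]]] := @abstract_main R Kinf nrm nrm_ge0 nrm_eq0 nrm0 H2 nrmN H4 H5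
  Hcompl n Gamma HGadd D (qF Fq) (card_finNzRing_gt1 Fq) HGconv q hq2 _ tballE l N.
exists i; split => //; exists Gamma; split => //.
by move=> x hx; have [a b] := A1 x hx; split => //; apply: Hgam.
Qed.
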